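(* Let $Q$ be a quantity space over a field $K$, and let $\mathsf{E}=\{\mathsf{e}_1,\ldots,\mathsf{e}_n\}$ be a basis for the abelian group $Q/{\sim}$. Then there is a subset $E=\{e_1,\ldots,e_n\}$ of $Q$ such that $e_i\in\mathsf{e}_i$ for each $i$ and $E$ is a basis for $Q$.
   Context: A scalable monoid over a (unital, associative) ring $R$ is a monoid $X$ (identity $1_X$, product written $xy$) together with a map $R\times X\to X$, $(\alpha,x)\mapsto\alpha\cdot x$, such that $1\cdot x=x$, $\alpha\cdot(\beta\cdot x)=\alpha\beta\cdot x$ and $\alpha\cdot(xy)=(\alpha\cdot x)y=x(\alpha\cdot y)$. A quantity space over a field $K$ is a commutative scalable monoid $Q$ over $K$ for which there exists a basis, i.e. a finite set $\{e_1,\ldots,e_n\}$ of invertible elements of $Q$ such that every $x\in Q$ has a unique expansion $x=\mu\cdot\prod_{i=1}^n e_i^{k_i}$ with $\mu\in K$ and $k_i\in\mathbb{Z}$. On $Q$, $x\sim y$ means $\alpha\cdot x=\beta\cdot y$ for some $\alpha,\beta\in K$; $[x]$ is the class of $x$; $Q/{\sim}$ is the set of classes with $[x][y]=[xy]$, an abelian group. A basis of a finitely generated abelian group $G$ is a set $\{\varepsilon_1,\ldots,\varepsilon_n\}\subseteq G$ such that every $g\in G$ has a unique expansion $g=\prod_{i=1}^n\varepsilon_i^{k_i}$ with $k_i\in\mathbb{Z}$. *)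

(* Defs.v *)
From HB Require Import structures.
From mathcomp Require Import all_boot all_order all_algebra.
Set Implicit Arguments. Unset Strict Implicit. Unset Printing Implicit Defensive.
Import GRing.Theory.
Local Open Scope ring_scope.

Record scalable_monoid (K : fieldType) := ScalableMonoid {
  sm_carrier :> Type;
  smul : sm_carrier -> sm_carrier -> sm_carrier;
  sone : sm_carrier;
  sscale : K -> sm_carrier -> sm_carrier;
  smulA : forall x y z, smul x (smul y z) = smul (smul x y) z;
  smul1x : forall x, smul sone x = x;
  smulx1 : forall x, smul x sone = x;
  sscale1 : forall x, sscale 1 x = x;
  sscaleA : forall a b x, sscale a (sscale b x) = sscale (a * b) x;
  sscaleMl : forall a x y, sscale a (smul x y) = smul (sscale a x) y;
  sscaleMr : forall a x y, sscale a (smul x y) = smul x (sscale a y)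
}.

Section QS.
Variables (K : fieldType) (Q : scalable_monoid K).

Definition commutative_sm : Prop := forall x y : Q, smul x y = smul y x.

(* integer power of e, given an inverse f of e *)
Definition zpow (e f : Q) (k : int) : Q :=
  match k with
  | Posz m => iter m (smul e) (sone Q)
  | Negz m => iter m.+1 (smul f) (sone Q)
  end.

Definition qprod n (e f : 'I_n -> Q) (k : {ffun 'I_n -> int}) : Q :=
  foldr (fun i acc => smul (zpow (e i) (f i) (k i)) acc) (sone Q) (enum 'I_n).

Definition is_qbasis n (e : 'I_n -> Q) : Prop :=
  exists f : 'I_n -> Q,
    (forall i, smul (e i) (f i) = sone Q /\ smul (f i) (e i) = sone Q) /\
    forall x : Q, exists mu : K, exists k : {ffun 'I_n -> int},
      x = sscale mu (qprod e f k) /\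
      forall (mu' : K) (k' : {ffun 'I_n -> int}),
        x = sscale mu' (qprod e f k') -> mu' = mu /\ k' = k.

Definition quantity_space : Prop :=
  commutative_sm /\ exists n, exists e : 'I_n -> Q, is_qbasis e.

Definition qsim (x y : Q) : Prop := exists a b : K, sscale a x = sscale b y.

Definition qclass (x : Q) : Q -> Prop := fun y => qsim x y.
Definition is_qclass (C : Q -> Prop) : Prop :=
  exists x, forall y, C y <-> qsim x y.
Definition cl_eq (C D : Q -> Prop) : Prop := forall y, C y <-> D y.

(* group operations on Q/~ : [x][y] = [xy], [x]^-1 = [y] with [xy] = [1] *)
Definition cl_mul (C D : Q -> Prop) : Q -> Prop :=
  fun z => exists x y, C x /\ D y /\ qsim z (smul x y).
Definition cl_inv (C : Q -> Prop) : Q -> Prop :=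
  fun z => exists x, C x /\ qsim (smul z x) (sone Q).
Definition cl_one : Q -> Prop := qclass (sone Q).
Definition cl_exp (C : Q -> Prop) (k : int) : Q -> Prop :=
  match k with
  | Posz m => iter m (cl_mul C) cl_one
  | Negz m => iter m.+1 (cl_mul (cl_inv C)) cl_one
  end.
Definition cl_prod n (eps : 'I_n -> (Q -> Prop)) (k : {ffun 'I_n -> int}) :=
  foldr (fun i acc => cl_mul (cl_exp (eps i) (k i)) acc) cl_one (enum 'I_n).

Definition is_class_basis n (eps : 'I_n -> (Q -> Prop)) : Prop :=
  (forall i, is_qclass (eps i)) /\
  forall x : Q, exists k : {ffun 'I_n -> int},
    cl_eq (qclass x) (cl_prod eps k) /\
    forall k' : {ffun 'I_n -> int}, cl_eq (qclass x) (cl_prod eps k') -> k' = k.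

End QS.

(* Main.v *)
Require Import Defs.
From mathcomp Require Import all_boot all_order all_algebra.
From Stdlib Require Import ClassicalEpsilon.
From mathcomp Require Import zify.
Set Implicit Arguments. Unset Strict Implicit. Unset Printing Implicit Defensive.
Import GRing.Theory.
Local Open Scope ring_scope.

Section Alg.
Variables (K : fieldType) (Q : scalable_monoid K).
Hypothesis comm : commutative_sm Q.
Local Notation "x ** y" := (smul x y) (at level 40, left associativity).
Local Notation one := (sone Q).

Lemma mul4 (a b c d : Q) : (a ** b) ** (c ** d) = (a ** c) ** (b ** d).
Proof.
rewrite -!smulA; congr (smul a _); rewrite !smulA; congr (smul _ d); exact: comm.
Qed.

Lemma scale_mul (a b : K) (x y : Q) : sscale a x ** sscale b y = sscale (a * b) (x ** y).
Proof. by rewrite -sscaleMl -sscaleMr sscaleA. Qed.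

Variables (e f : Q).
Hypothesis ef : e ** f = one.
Hypothesis fe : f ** e = one.

Lemma zpowS (a : int) : zpow e f (a + 1) = e ** zpow e f a.
Proof.
case: a => [m|[|m]].
- by have -> : Posz m + 1 = Posz m.+1 by lia.
- by rewrite /= smulx1 ef.
- have -> : Negz m.+1 + 1 = Negz m by lia.
  rewrite /= smulA ef smul1x //.
Qed.

Lemma zpowP (a : int) : zpow e f (a - 1) = f ** zpow e f a.
Proof.
case: a => [[|m]|m].
- by [].
- have -> : Posz m.+1 - 1 = Posz m by lia.
  rewrite /= smulA fe smul1x //.
- by have -> : Negz m - 1 = Negz m.+1 by lia.
Qed.

Lemma zpow_add (a b : int) : zpow e f (a + b) = zpow e f a ** zpow e f b.
Proof.
case: b => m.
- elim: m => [|m IH]; first by rewrite addr0 /= smulx1.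
  have -> : Posz m.+1 = Posz m + 1 by lia.
  rewrite addrA !zpowS IH smulA smulA (comm e); done.
- elim: m => [|m IH].
  + have -> : Negz 0 = 0 - 1 by lia.
  rewrite addrA addr0 zpowP /= smulx1 comm //.
  + have -> : Negz m.+1 = Negz m - 1 by lia.
  rewrite addrA !zpowP IH smulA smulA (comm f); done.
Qed.

End Alg.

Section Main.
Variables (K : fieldType) (Q : scalable_monoid K).
Hypothesis comm : commutative_sm Q.
Local Notation "x ** y" := (smul x y) (at level 40, left associativity).
Local Notation one := (sone Q).
Variables (m : nat) (b g : 'I_m -> Q).
Hypothesis Hbg : forall i, b i ** g i = one /\ g i ** b i = one.
Hypothesis Hco : forall x : Q, exists mu : K, exists k : {ffun 'I_m -> int},
      x = sscale mu (qprod b g k) /\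
      forall (mu' : K) (k' : {ffun 'I_m -> int}),
        x = sscale mu' (qprod b g k') -> mu' = mu /\ k' = k.

Local Notation V := {ffun 'I_m -> int}.
Local Notation D := (qprod b g).

Lemma F_add (s : seq 'I_m) (k k' : V) :
  foldr (fun i acc => zpow (b i) (g i) (k i) ** acc) one s **
  foldr (fun i acc => zpow (b i) (g i) (k' i) ** acc) one s =
  foldr (fun i acc => zpow (b i) (g i) ((k + k') i) ** acc) one s.
Proof.
elim: s => [|i s IH] /=; first by rewrite smulx1.
rewrite mul4 // IH ffunE zpow_add //; by case: (Hbg i).
Qed.

Lemma D_add (k k' : V) : D k ** D k' = D (k + k').
Proof. exact: F_add. Qed.

Lemma D0 : D 0 = one.
Proof.
rewrite /qprod; elim: (enum 'I_m) => [|i s IH] //=.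
by rewrite IH ffunE /= smulx1.
Qed.

Lemma D_iter (c : V) p : iter p (smul (D c)) one = D (c *+ p).
Proof.
elim: p => [|p IH]; first by rewrite mulr0n D0.
by rewrite iterS IH D_add -mulrS.
Qed.

Lemma zpowD (c : V) a : zpow (D c) (D (- c)) a = D (c *~ a).
Proof.
case: a => p; first exact: D_iter.
change (iter p.+1 (smul (D (-c))) one = D (c *~ Negz p)).
rewrite D_iter mulNrn //.
Qed.

Lemma coord x : {p : K * V | x = sscale p.1 (D p.2)}.
Proof.
have H : exists p : K * V, x = sscale p.1 (D p.2).
  by have [mu [k [-> _]]] := Hco x; exists (mu, k).
exact: constructive_indefinite_description H.
Qed.

Lemma coord_uniq x a d a' d' :
  x = sscale a (D d) -> x = sscale a' (D d') -> a = a' /\ d = d'.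
Proof.
move=> h1 h2; have [mu [k [_ U]]] := Hco x.
have [-> ->] := U _ _ h1; have [-> ->] := U _ _ h2; done.
Qed.

Definition dimq x := (sval (coord x)).2.
Definition coefq x := (sval (coord x)).1.

Lemma dimq_spec x : x = sscale (coefq x) (D (dimq x)).
Proof. exact: (proj2_sig (coord x)). Qed.

Lemma dimqE x a d : x = sscale a (D d) -> dimq x = d.
Proof. move=> h; have [_ ->] := coord_uniq h (dimq_spec x); done. Qed.

Lemma dimqM x y : dimq (x ** y) = dimq x + dimq y.
Proof.
apply: (@dimqE _ (coefq x * coefq y)).
by rewrite {1}(dimq_spec x) {1}(dimq_spec y) scale_mul D_add.
Qed.

Lemma dimqD d : dimq (D d) = d.
Proof. by apply: (@dimqE _ 1); rewrite sscale1. Qed.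

Lemma dimq1 : dimq one = 0.
Proof. by rewrite -D0 dimqD. Qed.

Lemma dimqZ a x : dimq (sscale a x) = dimq x.
Proof. by apply: (@dimqE _ (a * coefq x)); rewrite {1}(dimq_spec x) sscaleA. Qed.

Lemma qsimE x y : qsim x y <-> dimq x = dimq y.
Proof.
split.
- by case=> a [c h]; rewrite -(dimqZ a x) h dimqZ.
- move=> h; exists 0, 0.
  by rewrite (dimq_spec x) (dimq_spec y) !sscaleA !mul0r h.
Qed.

Definition isdim (C : Q -> Prop) (v : V) := forall z, C z <-> dimq z = v.

Lemma isdim_class x : isdim (qclass x) (dimq x).
Proof. move=> z; rewrite /qclass qsimE; split; by move=> ->. Qed.

Lemma isdim_one : isdim (@cl_one _ Q) 0.
Proof. by move=> z; rewrite -dimq1; apply: isdim_class. Qed.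

Lemma isdim_mul C E c d : isdim C c -> isdim E d -> isdim (cl_mul C E) (c + d).
Proof.
move=> hC hE z; split.
- by case=> x [y [/hC cx [/hE ey /qsimE]]]; rewrite dimqM cx ey.
- move=> hz; exists (D c), (D d); split; first by apply/hC; rewrite dimqD.
  split; first by apply/hE; rewrite dimqD.
  by apply/qsimE; rewrite dimqM !dimqD.
Qed.

Lemma isdim_inv C c : isdim C c -> isdim (cl_inv C) (- c).
Proof.
move=> hC z; split.
- case=> x [/hC cx /qsimE]; rewrite dimqM dimq1 cx => h.
  by apply/eqP; rewrite -subr_eq0 opprK h.
- move=> hz; exists (D c); split; first by apply/hC; rewrite dimqD.
  by apply/qsimE; rewrite dimqM dimqD dimq1 hz addNr.
Qed.

Lemma isdim_iter C c p : isdim C c -> isdim (iter p (cl_mul C) (@cl_one _ Q)) (c *+ p).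
Proof.
move=> hC; elim: p => [|p IH]; first by rewrite mulr0n; apply: isdim_one.
by rewrite iterS mulrS; apply: isdim_mul.
Qed.

Lemma isdim_exp C c a : isdim C c -> isdim (cl_exp C a) (c *~ a).
Proof.
move=> hC; case: a => p; first exact: isdim_iter.
have -> : c *~ Negz p = (-c) *+ p.+1 by rewrite mulNrn.
change (isdim (iter p.+1 (cl_mul (cl_inv C)) (@cl_one _ Q)) ((-c) *+ p.+1)).
by apply: isdim_iter; apply: isdim_inv.
Qed.

Lemma isdim_eq C E c d : isdim C c -> isdim E d -> (cl_eq C E <-> c = d).
Proof.
move=> hC hE; split.
- move=> h; have : C (D c) by apply/hC; rewrite dimqD.
  by move/h/hE; rewrite dimqD.
- by move=> cd z; subst d; split => [/hC /hE | /hE /hC].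
Qed.

Lemma isdim_prod n (eps : 'I_n -> Q -> Prop) (c : 'I_n -> V)
  (hc : forall i, isdim (eps i) (c i)) (k : {ffun 'I_n -> int}) s :
  isdim (foldr (fun i acc => cl_mul (cl_exp (eps i) (k i)) acc) (@cl_one _ Q) s)
        (foldr (fun i acc => c i *~ k i + acc) 0 s).
Proof.
elim: s => [|i s IH] /=; first exact: isdim_one.
by apply: isdim_mul => //; apply: isdim_exp.
Qed.

Lemma qprod_lin_s n (c : 'I_n -> V) (k : {ffun 'I_n -> int}) s :
  foldr (fun i acc => zpow (D (c i)) (D (- c i)) (k i) ** acc) one s
  = D (foldr (fun i acc => c i *~ k i + acc) 0 s).
Proof.
elim: s => [|i s IH] /=; first by rewrite D0.
by rewrite IH zpowD D_add.
Qed.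

Lemma main_aux n (eps : 'I_n -> Q -> Prop) (Heps : is_class_basis eps) :
  exists e : 'I_n -> Q, (forall i, eps i (e i)) /\ is_qbasis e.
Proof.
case: Heps => Hcl Hu.
pose x0 i := sval (constructive_indefinite_description _ (Hcl i)).
have hc : forall i, isdim (eps i) (dimq (x0 i)).
  move=> i z; have h := proj2_sig (constructive_indefinite_description _ (Hcl i)) z.
  rewrite -/(x0 i) in h.
  split => [/h/qsimE -> // | hz]; apply/h/qsimE; by rewrite hz.
pose c i := dimq (x0 i).
have ql : forall k : {ffun 'I_n -> int},
    qprod (fun i => D (c i)) (fun i => D (- c i)) k
    = D (foldr (fun i acc => c i *~ k i + acc) 0 (enum 'I_n)).
  move=> k; exact: qprod_lin_s.
exists (fun i => D (c i)); split.
- by move=> i; apply/(hc i); rewrite dimqD.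
- exists (fun i => D (- c i)); split.
  + by move=> i; rewrite !D_add addrN addNr D0.
  + move=> x; have [k [hk uk]] := Hu x.
    have lk := (isdim_eq (isdim_class x) (isdim_prod hc k (enum 'I_n))).1 hk.
    exists (coefq x), k; split.
    * by rewrite ql -lk; exact: dimq_spec.
    * move=> mu' k' h; rewrite ql in h.
      have [e1 e2] := coord_uniq h (dimq_spec x).
      split; first by [].
      apply: uk; apply/(isdim_eq (isdim_class x) (isdim_prod hc k' (enum 'I_n))).
      by rewrite e2.
Qed.

End Main.

Theorem proposition3p24 (K : fieldType) (Q : scalable_monoid K)
  (HQ : quantity_space Q) (n : nat) (eps : 'I_n -> (Q -> Prop))
  (Heps : is_class_basis eps) :
  exists e : 'I_n -> Q, (forall i, eps i (e i)) /\ is_qbasis e.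
Proof.
case: HQ => comm [m [b [g [Hbg Hco]]]].
exact: (main_aux comm Hbg Hco Heps).
Qed.
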